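(* Let $G$ be a finite chordal graph. Then every exposed edge of $G$ is contained in a cycle of $G$ all of whose edges are exposed edges of $G$.
   Context: All graphs are finite, undirected, simple. A graph is chordal if every induced cycle has length three. A facet edge of $G$ is an edge $xy$ such that $\{x,y\}$ is a maximal clique of $G$. An edge of $G$ is exposed if it is contained in a unique maximal clique of $G$ and it is not a facet edge. *)

(* Defs.v *)
(* A finite simple graph is a symmetric irreflexive
   relation [e : rel T] on a finite type [T]. *)
From mathcomp Require Import all_boot.
Set Implicit Arguments. Unset Strict Implicit. Unset Printing Implicit Defensive.

Section Graph.
Variables (T : finType) (e : rel T).

Definition clique (K : {set T}) : bool :=
  [forall x in K, forall y in K, (x != y) ==> e x y].

Definition max_clique (K : {set T}) : bool := maxset clique K.

Definition facet_edge (x y : T) : bool := e x y && max_clique [set x; y].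

Definition exposed_edge (x y : T) : bool :=
  [&& e x y,
      #|[set K : {set T} | max_clique K & [set x; y] \subset K]| == 1
    & ~~ facet_edge x y].

(* A cycle of the graph, given as a duplicate-free vertex sequence
   v_0, ..., v_{k-1} (k >= 3) whose cyclically consecutive vertices are
   adjacent. Its edges are the pairs {v, next s v}. *)
Definition is_graph_cycle (s : seq T) : bool :=
  [&& uniq s, 3 <= size s & cycle e s].

Definition cycle_has_edge (s : seq T) (x y : T) : bool :=
  ((x \in s) && (next s x == y)) || ((y \in s) && (next s y == x)).

Definition induced_cycle (s : seq T) : bool :=
  is_graph_cycle s &&
  [forall x, forall y, ((x \in s) && (y \in s) && e x y) ==> cycle_has_edge s x y].

Definition chordal : Prop := forall s : seq T, induced_cycle s -> size s = 3.

End Graph.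

(* Main.v *)
Require Import Defs.
From mathcomp Require Import all_boot.
From mathcomp Require Import zify.
Set Implicit Arguments. Unset Strict Implicit. Unset Printing Implicit Defensive.

Section Ex.
Variables (T : finType) (e : rel T).
Hypotheses (e_sym : symmetric e) (e_irr : irreflexive e).

Definition cn x y := [set z | e x z && e y z].
Definition xposed x y := [&& e x y, cn x y != set0 & clique e (cn x y)].

Lemma cliqueP (K : {set T}) : reflect (forall a b, a \in K -> b \in K -> a != b -> e a b) (clique e K).
Proof.
apply: (iffP forallP) => [H a b aK bK ab | H a].
  by move: (H a); rewrite aK /= => /forallP /(_ b); rewrite bK ab.
by apply/implyP => aK; apply/forallP => b; apply/implyP => bK; apply/implyP; apply: H.
Qed.

Lemma sub_cn x y (B : {set T}) : clique e B -> [set x; y] \subset B -> B \subset [set x; y] :|: cn x y.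
Proof.
move=> /cliqueP cB /subsetP sxy; apply/subsetP => b bB.
rewrite in_setU !inE.
case: (eqVneq b x) => //= bx; case: (eqVneq b y) => //= bY.
by apply/andP; split; apply: cB => //; rewrite ?sxy // ?inE ?eqxx ?orbT // eq_sym.
Qed.

Lemma clique_cn x y : e x y -> clique e (cn x y) -> clique e ([set x; y] :|: cn x y).
Proof.
move=> exy /cliqueP cc; apply/cliqueP => a b.
rewrite !inE => Ha Hb ab.
case/orP: Ha => [/orP[]/eqP Ha|Ha]; case/orP: Hb => [/orP[]/eqP Hb|Hb]; subst;
  rewrite ?eqxx // in ab *;
  try (by apply: cc; rewrite ?inE);
  try (by rewrite e_sym);
  try (by case/andP: Hb);
  by case/andP: Ha => ? ?; rewrite e_sym.
Qed.

Lemma clique2 x y : e x y -> clique e [set x; y].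
Proof.
move=> exy; apply/cliqueP => a b; rewrite !inE.
by move=> /orP[]/eqP-> /orP[]/eqP->; rewrite ?eqxx // e_sym.
Qed.

Lemma exposedE x y : exposed_edge e x y = xposed x y.
Proof.
rewrite /exposed_edge /xposed /facet_edge /max_clique.
case exy: (e x y) => //=.
set KK := [set K : {set T} | _ & _].
have c2 := clique2 exy.
have maxC : cn x y = set0 -> maxset (clique e) [set x; y].
  move=> C0; apply/maxsetP; split => // B cB sB; apply/eqP; rewrite eqEsubset sB andbT.
  by have := sub_cn cB sB; rewrite C0 setU0.
apply/idP/idP.
- case/andP => /cards1P [K KKK] nmax.
  have inK M : maxset (clique e) M -> [set x; y] \subset M -> M = K.
    by move=> mM sM; apply/set1P; rewrite -KKK inE mM sM.
  apply/andP; split.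
    by apply: contra nmax => /eqP C0; apply: maxC.
  apply/cliqueP => p q; rewrite !inE => /andP[exp eyp] /andP[exq eyq] pq.
  have Kc : clique e K.
    have : K \in KK by rewrite KKK inE.
    by rewrite inE => /andP[/maxsetp].
  have pinK p' : e x p' -> e y p' -> p' \in K.
    move=> exp' eyp'.
    have cp : clique e ([set x; y] :|: [set p']).
      apply/cliqueP => a b; rewrite !inE => /orP[/orP[]/eqP->|/eqP->] /orP[/orP[]/eqP->|/eqP->];
       rewrite ?eqxx // ?exy ?exp' ?eyp' // => _; by rewrite e_sym.
    have [M mM sM] := maxset_exists cp.
    rewrite -(inK M mM); last by apply: subset_trans sM; apply: subsetUl.
    by apply: (subsetP sM); rewrite !inE eqxx orbT.
  by move/cliqueP: Kc; apply => //; apply: pinK.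
- case/andP => C0 cC.
  have cK := clique_cn exy cC.
  have sK : [set x; y] \subset [set x; y] :|: cn x y by apply: subsetUl.
  have mK : maxset (clique e) ([set x; y] :|: cn x y).
    apply/maxsetP; split => // B cB sB; apply/eqP; rewrite eqEsubset sB andbT.
    by apply: sub_cn => //; apply: subset_trans sB.
  apply/andP; split.
    apply/cards1P; exists ([set x; y] :|: cn x y); apply/setP => M; rewrite !inE.
    apply/andP/eqP => [[mM sM]|->]; last by [].
    by apply/esym/(maxsetsup mM cK); apply: sub_cn => //; apply: maxsetp.
  apply/negP => mxy.
  have E := maxsetsup mxy cK sK.
  case/set0Pn: C0 => z zC.
  have : z \in [set x; y] by rewrite -E inE zC orbT.
  move: zC; rewrite !inE => /andP[exz eyz] /orP[]/eqP zE.
    by rewrite zE e_irr in exz.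
  by rewrite zE e_irr in eyz.
Qed.
End Ex.

Lemma next_mid (T : eqType) (c1 c2 : seq T) (x y : T) :
  uniq (c1 ++ x :: y :: c2) -> next (c1 ++ x :: y :: c2) x = y.
Proof.
case: c1 => [|h c1]; first by rewrite /next /= eqxx.
move=> Hu; rewrite next_nth.
have Hx : x \notin h :: c1.
  by move: Hu; rewrite cat_uniq => /and3P[_ /hasPn /(_ x (mem_head _ _)) /= ->].
rewrite mem_cat mem_head orbT index_cat (negbTE Hx) /= eqxx addn0.
by rewrite nth_cat ltnNge leqnSn /= subSnn.
Qed.

Lemma next_last (T : eqType) (x : T) (p : seq T) :
  uniq (x :: p) -> next (x :: p) (last x p) = x.
Proof.
move=> Hu; rewrite next_nth mem_last.
have Hn : last x p \notin belast x p by move: Hu; rewrite lastI rcons_uniq => /andP[].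
rewrite [index _ _](_ : _ = size p); first by rewrite nth_default.
by rewrite lastI -cats1 index_cat (negbTE Hn) /= eqxx addn0 size_belast.
Qed.

Lemma split2 (T : eqType) (c : seq T) x y : x \in c -> y \in c -> x != y ->
  exists c1 c2 c3, c = c1 ++ x :: c2 ++ y :: c3 \/ c = c1 ++ y :: c2 ++ x :: c3.
Proof.
case/splitPr => c1 r; rewrite mem_cat inE => /orP[yc1|/orP[/eqP->|yr]].
- case/splitPr: yc1 => d1 d2 _; exists d1, d2, r; right; by rewrite -catA.
- by rewrite eqxx.
- case/splitPr: yr => r1 r2 _; exists c1, r1, r2; by left.
Qed.

Section Chord.
Variables (T : finType) (e : rel T).
Hypotheses (e_sym : symmetric e) (e_irr : irreflexive e) (ch : chordal e).

Lemma chord_walk a : forall n s p, size p < n -> e a s -> e a (last s p) ->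
  path e s p -> s != last s p ->
  {in s :: p, forall z, [|| z == s, z == last s p | ~~ e a z && (z != a)]} ->
  e s (last s p).
Proof.
elim=> // n IH s p Hsz eas eat Hp.
case: (shortenP Hp) => p' Hp' Hu Hsub in eat * => st Hin.
have Hin' : {in s :: p', forall z, [|| z == s, z == last s p' | ~~ e a z && (z != a)]}.
  move=> z; rewrite inE => /orP[/eqP->|zp']; first by rewrite eqxx.
  by apply: Hin; rewrite inE Hsub ?orbT.
have Hsz' : size p' <= n.
  have Hu' : uniq p' by move: Hu; rewrite cons_uniq => /andP[].
  by apply: leq_trans (uniq_leq_size Hu' Hsub) _; rewrite -ltnS.
clear Hin Hsub Hp Hsz p.
set t := last s p' in eat st Hin' *.
apply/idPn => nst.
have sz : 2 <= size p'.
  move: st nst Hp'; rewrite /t; case: (p') => [|z [|w q]] //=; first by rewrite eqxx.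
  by rewrite andbT => _ /negbTE->.
set c := a :: s :: p'.
have aNc : a \notin s :: p'.
  apply/negP => /Hin' /or3P[] /eqP az.
  - by rewrite az e_irr in eas.
  - by rewrite az e_irr in eat.
  - by move: az; rewrite eqxx andbF.
have uc : uniq c by rewrite /c cons_uniq aNc Hu.
have cc : cycle e c.
  by rewrite /c /= eas -/(path e s (rcons p' a)) rcons_path Hp' /= e_sym eat.
have gc : is_graph_cycle e c.
  by rewrite /is_graph_cycle uc cc /= /c /= andbT ltnS; apply: leqW.
have : ~~ induced_cycle e c.
  apply/negP => /ch; rewrite /c /= => /eqP; rewrite !eqSS => /eqP Hs.
  by move: sz; rewrite Hs.
rewrite /induced_cycle gc /= => /forallPn [x /forallPn [y]].
rewrite negb_imply => /andP[/andP[/andP[xc yc] exy] nh].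
have hsym : cycle_has_edge c x y = cycle_has_edge c y x by rewrite /cycle_has_edge orbC.
have ha z : z \in s :: p' -> e a z -> cycle_has_edge c a z.
  move=> zq eaz; case/or3P: (Hin' z zq) => [/eqP->|/eqP->|]; last by rewrite eaz.
    by rewrite /cycle_has_edge /c mem_head /next /= eqxx eqxx.
  apply/orP; right; rewrite /c /t -[last s p']/(last a (s :: p')).
  by rewrite mem_last next_last // eqxx.
case: (eqVneq x a) => [xa|xNa].
  rewrite xa in nh exy; move: yc; rewrite /c inE => /orP[/eqP ya|yq].
    by rewrite ya e_irr in exy.
  by rewrite ha in nh.
case: (eqVneq y a) => [ya|yNa].
  rewrite hsym ya in nh; rewrite ya e_sym in exy.
  move: xc; rewrite /c inE (negbTE xNa) /= => xq.
  by rewrite ha in nh.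
have xq : x \in s :: p' by move: xc; rewrite /c inE (negbTE xNa).
have yq : y \in s :: p' by move: yc; rewrite /c inE (negbTE yNa).
have xy : x != y by apply: contraTneq exy => ->; rewrite e_irr.
have key : forall x0 y0 c1 c2 c3, e x0 y0 -> ~~ cycle_has_edge c x0 y0 ->
    s :: p' = c1 ++ x0 :: c2 ++ y0 :: c3 -> False.
  move=> {xc yc xq yq nh exy xy xNa yNa hsym} x0 y0 c1 c2 c3 exy nh E.
  case: c2 E => [|w c2] E.
    have xc : x0 \in c by rewrite /c in_cons E mem_cat mem_head !orbT.
    have nx : next c x0 = y0.
      have H : uniq ((a :: c1) ++ x0 :: y0 :: c3) by move: uc; rewrite /c E; apply.
      by rewrite /c E; exact: next_mid H.
    by move: nh; rewrite /cycle_has_edge xc nx eqxx.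
  have [p'' Ep''] : exists p'', c1 ++ x0 :: y0 :: c3 = s :: p''.
    case: c1 E => [|h c1] /= [-> _]; first by exists (y0 :: c3).
    by exists (c1 ++ x0 :: y0 :: c3).
  have Hs1 : size p'' < size p'.
    have : size (s :: p'') < size (s :: p') by rewrite -Ep'' E !size_cat /= size_cat /=; lia.
    by [].
  have Hl : last s p'' = t.
    rewrite /t -[last s p'']/(last a (s :: p'')) -[last s p']/(last a (s :: p')).
    by rewrite -Ep'' E !last_cat /= last_cat.
  have Hpa : path e s p''.
    rewrite -[path e s p'']/(sorted e (s :: p'')) -Ep'' sorted_cat_cons /= exy.
    move: Hp'; rewrite -[path e s p']/(sorted e (s :: p')) E sorted_cat_cons cat_path.
    by case/and3P => -> _ /= /andP[_ ->].
  have Hsb : {subset s :: p'' <= s :: p'}.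
    move=> z; rewrite -Ep'' E !mem_cat !inE mem_cat inE.
    by case/orP => [->|/orP[->|/orP[->|->]]]; rewrite ?orbT.
  have : e s (last s p'').
    apply: IH; rewrite ?Hl //; first by apply: leq_trans Hs1 Hsz'.
    by move=> z /Hsb /Hin'.
  by rewrite Hl (negbTE nst).
have [c1 [c2 [c3 [E|E]]]] := split2 xq yq xy.
  exact: key exy nh E.
by apply: (key y x c1 c2 c3); rewrite 1?e_sym -1?hsym.
Qed.
End Chord.

Section Simp.
Variables (T : finType) (e : rel T).
Hypotheses (e_sym : symmetric e) (e_irr : irreflexive e) (ch : chordal e).

Definition simp (U : {set T}) u := forall v w, v \in U -> w \in U -> e u v -> e u w -> v != w -> e v w.

Lemma path_in (r : rel T) (P : pred T) w q :
  (forall z z', r z z' -> P z') -> path r w q -> {subset q <= P}.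
Proof.
move=> HP; elim: q w => [|z q IH] w //= /andP[rz pq] z'; rewrite inE => /orP[/eqP->|].
  exact: HP rz.
exact: IH pq z'.
Qed.

Lemma simp_exists : forall n (U : {set T}), #|U| < n -> forall a b, a \in U -> b \in U ->
  a != b -> ~~ e a b -> exists2 u, u \in U & [/\ simp U u, u != a & ~~ e a u].
Proof.
elim=> // n IH U HU a b aU bU ab nab.
pose U' := [set z in U | (z != a) && ~~ e a z].
pose r := fun z w => [&& e z w, z \in U' & w \in U'].
have r_sym : symmetric r by move=> z w; rewrite /r e_sym; case: (z \in U'); case: (w \in U'); rewrite /= ?andbF.
have rU' z w : r z w -> w \in U' by case/and3P.
have bU' : b \in U' by rewrite inE bU eq_sym ab nab.
pose B := [set z | connect r b z].
have BU' z : z \in B -> z \in U'.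
  rewrite inE => /connectP [q pq ->]; move: (mem_last b q); rewrite inE => /orP[/eqP->//|].
  exact: path_in rU' pq _.
pose S := [set z in U | e a z && [exists w in B, e z w]].
pose W := B :|: S.
have F2 u v : u \in B -> v \in U -> e u v -> v \in W.
  move=> uB vU euv; have := BU' u uB; rewrite inE => /and3P[uU uNa nau].
  case: (eqVneq v a) => [va|vNa]; first by move: euv; rewrite va e_sym (negbTE nau).
  case eav: (e a v).
    by rewrite inE; apply/orP; right; rewrite inE vU eav /=; apply/existsP; exists u; rewrite uB e_sym.
  rewrite inE; apply/orP; left; rewrite inE.
  apply: connect_trans (_ : connect r u v); first by move: uB; rewrite inE.
  by apply: connect1; rewrite /r euv BU' //= inE vU vNa eav.
have F3 s t : s \in S -> t \in S -> s != t -> e s t.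
  rewrite !inE => /and3P[sU eas /existsP[w1 /andP[w1B esw1]]] /and3P[tU eat /existsP[w2 /andP[w2B etw2]]] st.
  have : connect r w1 w2.
    apply: connect_trans (_ : connect r b w2); last by move: w2B; rewrite inE.
    by rewrite (sym_connect_sym r_sym); move: w1B; rewrite inE.
  case/connectP => q pq w2E.
  have qU' : {subset w1 :: q <= U'}.
    move=> z; rewrite inE => /orP[/eqP->|]; [exact: BU'|exact: path_in rU' pq z].
  have := @chord_walk T e e_sym e_irr ch a (size (w1 :: rcons q t)).+1 s (w1 :: rcons q t) (ltnSn _) eas.
  rewrite /= last_rcons; apply; [exact: eat| |exact: st|].
  - rewrite esw1 rcons_path -w2E [e w2 t]e_sym etw2 andbT /=.
    by apply: sub_path pq => z z' /and3P[].
  - move=> z Hz; case: (eqVneq z s) => //= zs; case: (eqVneq z t) => //= zt.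
    have zq : z \in w1 :: q.
      move: Hz; rewrite in_cons (negbTE zs) /= in_cons mem_rcons in_cons (negbTE zt) /=.
      by rewrite in_cons.
    by move: (qU' z zq); rewrite inE => /and3P[_ -> ->].
have bB : b \in B by rewrite inE connect0.
have WU : W \subset U.
  by apply/subsetP => z; rewrite in_setU => /orP[/BU'|]; rewrite inE => /andP[].
have aW : a \notin W.
  rewrite in_setU negb_or; apply/andP; split.
    by apply/negP => /BU'; rewrite inE eqxx andbF.
  by rewrite inE e_irr andbF.
have HW : #|W| < n.
  have : #|W| < #|U| by apply: proper_card; apply/properP; split => //; exists a.
  by move=> H; apply: leq_trans H _; rewrite -ltnS.
have fin u : u \in B -> simp W u -> exists2 u, u \in U & [/\ simp U u, u != a & ~~ e a u].
  move=> uB sW; exists u; first by have := BU' u uB; rewrite inE => /andP[].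
  split; last 2 first.
  - by have := BU' u uB; rewrite inE => /and3P[].
  - by have := BU' u uB; rewrite inE => /and3P[].
  move=> v w vU wU euv euw vw; apply: sW => //; [exact: F2 uB vU euv|exact: F2 uB wU euw].
case: (boolP (clique e W)) => [cW|ncW].
  apply: (fin b bB) => v w vW wW _ _ vw.
  by move: cW => /forallP /(_ v); rewrite vW /= => /forallP /(_ w); rewrite wW vw.
have [c0 c0W [d0 [d0W c0d0 nc0d0 Hc0]]] : exists2 c0, c0 \in W & exists d0, [/\ d0 \in W, c0 != d0, ~~ e c0 d0 &
    forall u, u \in W -> u != c0 -> ~~ e c0 u -> u \notin S].
  case: (boolP [exists s in S, exists d in W, (s != d) && ~~ e s d]).
    case/existsP => s0 /andP[s0S /existsP[d /andP[dW /andP[sd nsd]]]].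
    exists s0; first by rewrite inE s0S orbT.
    exists d; split => // u uW us nsu; apply/negP => uS.
    by rewrite F3 // eq_sym in nsu.
  move=> nex.
  move: ncW => /forallPn [c]; rewrite negb_imply => /andP[cW /forallPn [d]].
  rewrite negb_imply => /andP[dW]; rewrite negb_imply => /andP[cd ncd].
  exists c => //; exists d; split => // u uW uc ncu; apply/negP => uS.
  move: nex => /existsPn /(_ u); rewrite uS /= => /existsPn /(_ c).
  by rewrite cW uc /= e_sym ncu.
have [u uW [su uc0 nc0u]] := IH W HW c0 d0 c0W d0W c0d0 nc0d0.
have uB : u \in B.
  by move: (uW); rewrite in_setU (negbTE (Hc0 u uW uc0 nc0u)) orbF.
exact: fin uB su.
Qed.
End Simp.

Lemma chordal_restr (T : finType) (f : rel T) (P : pred T) :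
  chordal f -> chordal (fun a b => [&& f a b, P a & P b]).
Proof.
move=> ch s /andP[gc /forallP Hind]; apply: ch.
have gc' := gc; move: gc' => /and3P[us szs cs].
have Ps z : z \in s -> P z by move=> zs; have := next_cycle cs zs => /and3P[].
apply/andP; split.
  by rewrite /is_graph_cycle us szs /=; apply: sub_cycle cs => a b /and3P[].
apply/forallP => x; apply/forallP => y; apply/implyP => /andP[/andP[xs ys] fxy].
by have := Hind x => /forallP /(_ y); rewrite xs ys fxy Ps ?Ps.
Qed.

Lemma xposed_sym (T : finType) (f : rel T) : symmetric f -> symmetric (xposed f).
Proof.
move=> fs a b; rewrite /xposed fs.
have -> : cn f a b = cn f b a by apply/setP => z; rewrite !inE andbC.
by [].
Qed.

Section Main.
Variable T : finType.

Definition gsimp (f : rel T) v := forall p q, f v p -> f v q -> p != q -> f p q.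

Lemma ex_simp (f : rel T) (fs : symmetric f) (fi : irreflexive f) (ch : chordal f)
  (U : {set T}) (HU : forall a b, f a b -> a \in U) x y z :
  f x y -> f x z -> f y z -> exists v, [/\ v \in U, v != x, v != y & gsimp f v].
Proof.
move=> fxy fxz fyz.
have HU' a b : f a b -> b \in U by rewrite fs; apply: HU.
have key c : c \in U -> (exists2 d, d \in U & (c != d) && ~~ f c d) ->
    exists2 u, u \in U & [/\ simp f U u, u != c & ~~ f c u].
  move=> cU [d dU /andP[cd ncd]].
  exact: (@simp_exists T f fs fi ch #|U|.+1 U (ltnSn _) c d cU dU cd ncd).
have gs u : u \in U -> simp f U u -> gsimp f u.
  by move=> uU su p q fup fuq pq; apply: su => //; apply: HU' fup + apply: HU' fuq.
have xU : x \in U by apply: HU fxy.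
have yU : y \in U by apply: HU' fxy.
case: (boolP [forall a in U, forall b in U, (a != b) ==> f a b]) => [comp|ncomp].
  exists z; split.
  - exact: HU' fxz.
  - by apply: contraTneq fxz => ->; rewrite fi.
  - by apply: contraTneq fyz => ->; rewrite fi.
  move=> p q fzp fzq pq.
  move: comp => /forallP /(_ p); rewrite (HU' _ _ fzp) /= => /forallP /(_ q).
  by rewrite (HU' _ _ fzq) pq.
move: ncomp => /forallPn [a]; rewrite negb_imply => /andP[aU /forallPn [b]].
rewrite negb_imply => /andP[bU]; rewrite negb_imply => /andP[ab nab].
case: (boolP ((a != x) && ~~ f a x)) => [/andP[ax nax]|h1].
  case: (key x xU) => [|u uU [su ux nxu]]; first by exists a => //; rewrite eq_sym ax /= fs nax.
  exists u; split => //; last exact: gs.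
  by apply: contraNneq nxu => ->.
case: (boolP ((a != y) && ~~ f a y)) => [/andP[ay nay]|h2].
  case: (key y yU) => [|u uU [su uy nyu]]; first by exists a => //; rewrite eq_sym ay /= fs nay.
  exists u; split => //; last exact: gs.
  by apply: contraNneq nyu => ->; rewrite fs.
case: (key a aU) => [|u uU [su ua nau]]; first by exists b => //; rewrite ab.
exists u; split => //; last exact: gs.
- apply/eqP => ux; move: h1; rewrite negb_and !negbK -ux => /orP[/eqP au|fau].
    by rewrite au eqxx in ua.
  by rewrite fau in nau.
- apply/eqP => uy; move: h2; rewrite negb_and !negbK -uy => /orP[/eqP au|fau].
    by rewrite au eqxx in ua.
  by rewrite fau in nau.
Qed.

Definition Rr (f : rel T) x y a b := xposed f a b && ([set a; b] != [set x; y]).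

Lemma main_lemma n : forall (f : rel T) (U : {set T}), #|U| < n -> symmetric f ->
  irreflexive f -> chordal f -> (forall a b, f a b -> a \in U) ->
  forall x y, xposed f x y -> connect (Rr f x y) x y.
Proof.
elim: n => // n IH f U HU fs fi ch HfU x y Hx.
move: (Hx) => /and3P[fxy /set0Pn[z]]; rewrite inE => /andP[fxz fyz] cC.
have [v [vU vx vy gv]] := ex_simp fs fi ch HfU fxy fxz fyz.
have L1 a b : f v a -> f v b -> a != b -> xposed f a v.
  move=> fva fvb ab; rewrite /xposed fs fva /=; apply/andP; split.
    by apply/set0Pn; exists b; rewrite inE gv.
  apply/cliqueP => p q; rewrite !inE => /andP[_ fvp] /andP[_ fvq]; exact: gv.
have nset a : [set a; v] != [set x; y].
  apply/negP => /eqP E; have : v \in [set x; y] by rewrite -E !inE eqxx orbT.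
  by rewrite !inE (negbTE vx) (negbTE vy).
have nset' b : [set v; b] != [set x; y] by rewrite setUC nset.
pose f' := fun a b => [&& f a b, a != v & b != v].
have ch' : chordal f' := @chordal_restr T f (fun w : T => w != v) ch.
case: (eqVneq (cn f' x y) set0) => [C0|C0].
  have zv : z = v.
    apply/eqP; apply/negPn/negP => zv.
    have : z \in cn f' x y by rewrite inE /f' fxz fyz zv eq_sym vx eq_sym vy.
    by rewrite C0 inE.
  subst z.
  have xy : x != y by apply: contraTneq fxy => ->; rewrite fi.
  have fvx : f v x by rewrite fs.
  have fvy : f v y by rewrite fs.
  apply: (@connect_trans _ _ v); apply: connect1; rewrite /Rr ?nset ?nset' !andbT.
    exact: L1 fvx fvy xy.
  by rewrite xposed_sym //; apply: L1 fvy fvx _; rewrite eq_sym.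
have Hx' : xposed f' x y.
  rewrite /xposed C0 /f' fxy /= [x == v]eq_sym [y == v]eq_sym vx vy /=.
  apply/cliqueP => p q; rewrite !inE /f'.
  move=> /andP[/and3P[fxp _ pv] /and3P[fyp _ _]] /andP[/and3P[fxq _ qv] /and3P[fyq _ _]] pq.
  rewrite pv qv !andbT; move/cliqueP: cC; apply => //; by rewrite inE ?fxp ?fyp ?fxq ?fyq.
have HU' : #|U :\ v| < n.
  by move: HU; rewrite (cardsD1 v U) vU add1n ltnS.
have Hf'U a b : f' a b -> a \in U :\ v.
  by rewrite /f' => /and3P[fab av _]; rewrite !inE av (HfU a b fab).
have fs' : symmetric f' by move=> a b; rewrite /f' fs; case: (a != v); case: (b != v); rewrite /= ?andbF.
have fi' : irreflexive f' by move=> a; rewrite /f' fi.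
have := IH f' (U :\ v) HU' fs' fi' ch' Hf'U x y Hx'.
apply: connect_sub => a b /andP[Xab Sab].
move: (Xab) => /and3P[/and3P[fab av bv] Cab cab].
case: (boolP (f v a && f v b)) => [/andP[fva fvb]|nab].
  have ab : a != b by apply: contraTneq fab => ->; rewrite fi.
  apply: (@connect_trans _ _ v); apply: connect1; rewrite /Rr ?nset ?nset' !andbT.
    exact: L1 fva fvb ab.
  by rewrite xposed_sym //; apply: L1 fvb fva _; rewrite eq_sym.
apply: connect1; rewrite /Rr Sab andbT.
have E : cn f a b = cn f' a b.
  apply/setP => w; rewrite !inE /f' av bv /=.
  case: (eqVneq w v) => [->|wv]; last by rewrite !andbT.
  by rewrite !andbF; apply/negbTE; apply: contra nab => /andP[fav fbv]; rewrite fs fav fs fbv.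
rewrite /xposed fab E Cab /=.
apply/cliqueP => p q pC qC pq.
by move/cliqueP: cab => /(_ p q pC qC pq) /and3P[].
Qed.
End Main.

Unset Implicit Arguments.

Theorem theorem2p12 (T : finType) (e : rel T)
  (e_sym : symmetric e) (e_irr : irreflexive e) :
  chordal e ->
  forall x y : T, exposed_edge e x y ->
  exists s : seq T,
    [/\ is_graph_cycle e s, cycle_has_edge s x y & cycle (exposed_edge e) s].
Proof.
move=> ch x y Hxy.
have ex := exposedE e_sym e_irr.
rewrite ex in Hxy.
have exy : e x y by case/and3P: Hxy.
have HT : #|[set: T]| < #|T|.+1 by rewrite cardsT.
have Hc := @main_lemma T #|T|.+1 e setT HT e_sym e_irr ch
  (fun a b _ => in_setT a) x y Hxy.
case/connectP: Hc => p Hp.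
case: (shortenP Hp) => p' Hp' Hu _ yE.
have Rsub : subrel (Rr e x y) e by move=> a b /andP[/and3P[]].
have szp : 2 <= size p'.
  move: Hp' yE Hu; case: (p') => [|w [|w' r]] //=.
    by move=> _ yE; rewrite yE e_irr in exy.
  by move=> /andP[/andP[_]] + _ yE; rewrite -yE eqxx.
exists (x :: p'); split.
- rewrite /is_graph_cycle Hu /=; apply/andP; split; first by [].
  rewrite rcons_path -yE e_sym exy andbT.
  exact: (sub_path Rsub Hp').
- apply/orP; right; by rewrite yE mem_last next_last // eqxx.
- rewrite -[cycle _ _]/(path (exposed_edge e) x (rcons p' x)) rcons_path -yE ex.
  rewrite xposed_sym // Hxy andbT.
  by apply: sub_path Hp' => a b /andP[]; rewrite ex.
Qed.
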